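(* Let $q\geq 1$ be a constant, let $(X,d)$ be a finite metric space and $k$ an integer with $2\le k\le |X|$ (with $k$ even when considering remote-bipartition). For each diversity function $\mathrm{div}^q\in\{\mathrm{cl}^q,\mathrm{st}^q,\mathrm{bp}^q\}$ and each fixed optimal $k$-set $\mathrm{OPT}_{\mathrm{div}^q}\subseteq X$, there is a point $z_0\in \mathrm{OPT}_{\mathrm{div}^q}$ such that \[ X\setminus B\big(z_0, c_{\mathrm{div}^q}(\Delta_{\mathrm{div}^q})^{1/q}\big)\subseteq \mathrm{OPT}_{\mathrm{div}^q},\] where $c_{\mathrm{cl}^q}=2$, $c_{\mathrm{st}^q}=4$ and $c_{\mathrm{bp}^q}=6$.
   Context: For $T\subseteq X$ with $|T|=k$: $\mathrm{cl}^q(T)=\sum_{\{u,v\}\subseteq T} d^q(u,v)$; $\mathrm{st}^q(T)=\min_{z\in T}\sum_{u\in T\setminus\{z\}} d^q(z,u)$; $\mathrm{bp}^q(T)=\min_{L\subseteq T,|L|=|T|/2}\sum_{\ell\in L,r\in T\setminus L} d^q(\ell,r)$, where $d^q=d(\cdot,\cdot)^q$. An optimal $k$-set $\mathrm{OPT}_{\mathrm{div}^q}$ is a $k$-subset of $X$ maximizing $\mathrm{div}^q$. The average optimal values are $\Delta_{\mathrm{cl}^q}=\mathrm{cl}^q(\mathrm{OPT}_{\mathrm{cl}^q})/\binom{k}{2}$, $\Delta_{\mathrm{st}^q}=\mathrm{st}^q(\mathrm{OPT}_{\mathrm{st}^q})/(k-1)$, $\Delta_{\mathrm{bp}^q}=\mathrm{bp}^q(\mathrm{OPT}_{\mathrm{bp}^q})/(k^2/4)$.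 $B(u,r)=\{v\in X: d(u,v)\le r\}$. *)

(* Defs.v *)
From HB Require Import structures.
From mathcomp Require Import all_boot all_order all_algebra.
From mathcomp Require Import reals exp.
Set Implicit Arguments. Unset Strict Implicit. Unset Printing Implicit Defensive.
Import Order.TTheory GRing.Theory Num.Theory.
Local Open Scope ring_scope.

Section Diversity.
Variables (R : realType) (X : finType) (d : X -> X -> R) (q : R).

Definition is_metric : Prop :=
  [/\ forall x y, 0 <= d x y,
      forall x y, d x y = 0 <-> x = y,
      forall x y, d x y = d y x &
      forall x y z, d x z <= d x y + d y z].

Definition dq (u v : X) : R := powR (d u v) q.

(* remote-clique: sum over unordered pairs {u,v} ⊆ T (u <> v); each
   unordered pair is counted twice in the ordered double sum *)
Definition cl (T : {set X}) : R :=
  (\sum_(u in T) \sum_(v in T | v != u) dq u v) / 2.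

Definition st_val (T : {set X}) (z : X) : R := \sum_(u in T :\ z) dq z u.
Definition st (T : {set X}) : R :=
  match [pick z in T] with
  | Some z0 => \big[Num.min/st_val T z0]_(z in T) st_val T z
  | None => 0
  end.

Definition bp_val (T L : {set X}) : R :=
  \sum_(l in L) \sum_(r in T :\: L) dq l r.
Definition bp (T : {set X}) : R :=
  match [pick L in powerset T | #|L| == #|T|./2] with
  | Some L0 => \big[Num.min/bp_val T L0]_(L in powerset T | #|L| == #|T|./2) bp_val T L
  | None => 0
  end.

End Diversity.

Inductive divkind := Clique | Star | Bipartition.

Definition div (R : realType) (X : finType) (d : X -> X -> R) (q : R)
    (K : divkind) (T : {set X}) : R :=
  match K with
  | Clique => cl d q T
  | Star => st d q T
  | Bipartition => bp d q T
  end.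

Definition div_norm (R : realType) (K : divkind) (k : nat) : R :=
  match K with
  | Clique => ('C(k, 2))%:R
  | Star => (k.-1)%:R
  | Bipartition => (k%:R) ^+ 2 / 4
  end.

Definition div_const (R : realType) (K : divkind) : R :=
  match K with
  | Clique => 2
  | Star => 4
  | Bipartition => 6
  end.

Definition optimal_kset (R : realType) (X : finType) (d : X -> X -> R) (q : R)
    (K : divkind) (k : nat) (OPT : {set X}) : Prop :=
  #|OPT| = k /\ forall S : {set X}, #|S| = k -> div d q K S <= div d q K OPT.

Definition Delta (R : realType) (X : finType) (d : X -> X -> R) (q : R)
    (K : divkind) (k : nat) (OPT : {set X}) : R :=
  div d q K OPT / div_norm R K k.

Definition ball (R : realType) (X : finType) (d : X -> X -> R) (u : X) (r : R)
  : {set X} := [set v | d u v <= r].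

(* Main.v *)
Require Import Defs.
From HB Require Import structures.
From mathcomp Require Import all_boot all_order all_algebra.
From mathcomp Require Import reals exp.
From mathcomp Require hoelder convex classical_sets.
From mathcomp Require Import zify ring lra.
Import Order.TTheory GRing.Theory Num.Theory.
Local Open Scope ring_scope.

Lemma pm (R : realType) (q a b : R) : 1 <= q -> 0 <= a -> 0 <= b ->
  powR ((a + b) / 2) q <= (powR a q + powR b q) / 2.
Proof.
move=> q1 a0 b0.
have h0 : (0:R) <= 2^-1 by rewrite invr_ge0.
have h1 : (2^-1:R) <= 1 by rewrite invf_le1 ?ler1n.
have := hoelder.convex_powR q1 (interval_inference.Itv01 h0 h1) (x:=a) (y:=b).
move=> H.
have {H} := H (classical_sets.mem_set _) (classical_sets.mem_set _).
have e : (unstable.onem (2^-1 : R)) = 2^-1.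
  by rewrite /unstable.onem {1}(splitr 1) div1r addrK.
move=> /=; rewrite convex.convRE /= e.
set c := convex.conv _ _ _.
have -> : c = 2^-1 * a + 2^-1 * b.
  rewrite /c /convex.conv /= e; reflexivity.
rewrite !in_itv /= !andbT a0 b0 => /(_ isT isT).
move=> H; rewrite -!mulrDr in H; by rewrite mulrC [X in _ <= X]mulrC.
Qed.

Lemma bin2_2 (k : nat) : (2 * 'C(k, 2) = k * k.-1)%N.
Proof.
elim: k => [|k IH] //.
rewrite binS bin1 mulnDr IH /=; case: k {IH} => //= k; lia.
Qed.

Lemma bigmin_att (R : realType) (I : finType) (P : pred I) (F : I -> R) i0 :
  P i0 ->
  (exists2 i, P i & \big[Num.min/F i0]_(i | P i) F i = F i) /\
  (forall j, P j -> \big[Num.min/F i0]_(i | P i) F i <= F j).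
Proof.
move=> Pi0; split.
  apply: (big_ind (fun x => exists2 i, P i & x = F i)).
  - by exists i0.
  - move=> x y [i Pi ->] [j Pj ->]; case: (leP (F i) (F j)) => _.
    by exists i. by exists j.
  - by move=> i Pi; exists i.
move=> j Pj; by rewrite (bigD1 j) //= ge_min lexx orTb.
Qed.

Lemma sum_sub (R : realType) (X : finType) (A B : {set X}) (F : X -> R) :
  A \subset B -> (forall x, x \in B -> 0 <= F x) ->
  \sum_(x in A) F x <= \sum_(x in B) F x.
Proof.
move=> AB F0; rewrite (big_setID (A:=B) A) /= (setIidPr AB) lerDl.
by apply: sumr_ge0 => x /setDP [xB _]; exact: F0.
Qed.

Section G.
Variables (R : realType) (X : finType) (d : X -> X -> R) (q : R).
Hypothesis (met : is_metric d) (q1 : 1 <= q).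

Definition KK : R := powR 2 q / 2.

Lemma q0 : 0 <= q. Proof. exact: le_trans q1. Qed.

Lemma dq_ge0 u v : 0 <= dq d q u v. Proof. exact: powR_ge0. Qed.

Lemma dq_sym u v : dq d q u v = dq d q v u.
Proof. by case: met => _ _ s _; rewrite /dq s. Qed.

Lemma d_ge0 u v : 0 <= d u v. Proof. by case: met. Qed.

Lemma KK_ge1 : 1 <= KK.
Proof.
rewrite /KK ler_pdivlMr // mul1r; have := le1r_powR (a:=2) (r:=q).
by apply => //; rewrite ler1n.
Qed.

Lemma KK2 : 2 * KK = powR 2 q.
Proof. by rewrite /KK; field. Qed.

Lemma powR_pm a b : 0 <= a -> 0 <= b ->
  powR (a + b) q <= KK * (powR a q + powR b q).
Proof.
move=> a0 b0.
have e : a + b = 2 * ((a + b) / 2) by field.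
rewrite e powRM //; last by rewrite divr_ge0 ?addr_ge0.
have := @pm R q a b q1 a0 b0 => h.
rewrite /KK -mulrA; apply: ler_wpM2l; first exact: powR_ge0.
by rewrite [X in _ <= X]mulrC.
Qed.

Lemma tri x y z : dq d q x z <= KK * (dq d q x y + dq d q y z).
Proof.
have h := powR_pm _ _ (d_ge0 x y) (d_ge0 y z). rewrite /dq. apply: le_trans h.
case: met => _ _ _ t.
apply: ge0_ler_powR => //; first exact: q0.
- by rewrite nnegrE d_ge0.
- by rewrite nnegrE addr_ge0 ?d_ge0.
Qed.

Lemma avg (W : {set X}) z v :
  #|W|%:R * dq d q z v <= KK * \sum_(w in W) (dq d q z w + dq d q w v).
Proof.
rewrite -sum1_card natr_sum mulr_suml mulr_sumr.
by apply: ler_sum => w _; rewrite mul1r tri.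
Qed.

Lemma final D c Dl : 0 <= D -> 0 <= c -> 0 <= Dl ->
  powR D q <= powR c q * Dl -> D <= c * powR Dl q^-1.
Proof.
move=> D0 c0 Dl0 h.
have qn0 : q != 0 by rewrite gt_eqF // (lt_le_trans _ q1).
have inv x : 0 <= x -> powR (powR x q) q^-1 = x.
  by move=> x0; rewrite -powRrM mulfV // powRr1.
rewrite -(inv D D0) -(inv c c0) -powRM ?powR_ge0 //.
apply: ge0_ler_powR => //.
- by rewrite invr_ge0 q0.
- by rewrite nnegrE powR_ge0.
- by rewrite nnegrE mulr_ge0 ?powR_ge0.
Qed.


Lemma reduce (OPT : {set X}) z0 c Dl : 0 <= c -> 0 <= Dl ->
  (forall v, v \notin OPT -> powR (d z0 v) q <= powR c q * Dl) ->
  ~: ball d z0 (c * powR Dl q^-1) \subset OPT.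
Proof.
move=> c0 Dl0 h; apply/subsetP => v; rewrite !inE; apply: contraNT => vO.
by apply: final => //; [exact: d_ge0 | exact: h].
Qed.

Definition D2 (T : {set X}) := \sum_(u in T) \sum_(w in T | w != u) dq d q u w.

Lemma D2D1 (T : {set X}) x : x \in T -> D2 T = D2 (T :\ x) + 2 * \sum_(w in T :\ x) dq d q x w.
Proof.
move=> xT; rewrite /D2 (bigD1 x) //=.
have e1 : \sum_(w in T | w != x) dq d q x w = \sum_(w in T :\ x) dq d q x w.
  by apply: eq_bigl => w; rewrite in_setD1 andbC.
rewrite e1 addrC mulr2n mulrDl mul1r addrA; congr (_ + _).
have e2 : \sum_(u in T | u != x) \sum_(w in T | w != u) dq d q u w =
  \sum_(u in T :\ x) (dq d q x u + \sum_(w in T :\ x | w != u) dq d q u w).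
  rewrite [LHS](eq_bigl (fun u => u \in T :\ x)); last by move=> u; rewrite in_setD1 andbC.
  apply: eq_bigr => u; rewrite in_setD1 => /andP [ux uT].
  rewrite (bigD1 x) /=; last by rewrite xT eq_sym ux.
  rewrite dq_sym; congr (_ + _); apply: eq_bigl => w; rewrite in_setD1.
  by case: (w \in T); case: (w != u); case: (w != x).
rewrite e2 big_split /= addrC; done.
Qed.


Lemma exists_in (OPT : {set X}) k : #|OPT| = k -> (2 <= k)%N -> exists z, z \in OPT.
Proof.
move=> cO k2; have : (0 < #|OPT|)%N by rewrite cO; apply: leq_trans k2.
by case/card_gt0P => z zO; exists z.
Qed.

Lemma card_swap (OPT : {set X}) k z0 v : #|OPT| = k -> z0 \in OPT -> v \notin OPT ->
  #|v |: (OPT :\ z0)| = k /\ #|OPT :\ z0| = k.-1.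
Proof.
move=> cO z0O vO.
have c1 : #|OPT :\ z0| = k.-1 by rewrite -cO (cardsD1 z0 OPT) z0O.
split => //; rewrite cardsU1 c1 in_setD1 (negbTE vO) andbF /=.
have : (0 < k)%N by rewrite -cO; apply/card_gt0P; exists z0.
by case: k {cO c1}.
Qed.

Lemma clique_case k OPT : (2 <= k)%N -> optimal_kset d q Clique k OPT ->
  exists2 z0, z0 \in OPT & forall v, v \notin OPT ->
    powR (d z0 v) q <= powR 2 q * Delta d q Clique k OPT.
Proof.
move=> k2 [cO opt].
have [z1 z1O] := exists_in _ _ cO k2.
pose s z := \sum_(w in OPT :\ z) dq d q z w.
case: (@Order.TotalTheory.arg_minP _ _ _ z1 (mem OPT) s z1O) => z0 z0O minz.
exists z0 => // v vO.
have [cS cW] := card_swap _ _ _ _ cO z0O vO.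
have kR : (0 : R) < k%:R by rewrite ltr0n; apply: leq_trans k2.
have k1R : (0 : R) < (k.-1)%:R by rewrite ltr0n; move: k2; clear; case: k => [|[|]].
have hD2 : D2 OPT = \sum_(u in OPT) s u.
  apply: eq_bigr => u _; apply: eq_bigl => w; by rewrite in_setD1 andbC.
have hks : k%:R * s z0 <= D2 OPT.
  rewrite hD2 -cO -sum1_card natr_sum mulr_suml; apply: ler_sum => u uO.
  by rewrite mul1r; apply: minz.
have hDel : Delta d q Clique k OPT * (k%:R * (k.-1)%:R) = D2 OPT.
  rewrite /Delta /div /div_norm /cl -/(D2 OPT) -natrM -bin2_2 natrM.
  have : ('C(k, 2))%:R != (0:R).
    by rewrite pnatr_eq0 -lt0n bin_gt0.
  move=> h; field; by rewrite h.
set S := v |: (OPT :\ z0).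
have hcl := opt S cS; rewrite /div /cl -/(D2 S) -/(D2 OPT) in hcl.
have hD2S : D2 S <= D2 OPT by lra.
have vS : v \in S by rewrite setU11.
rewrite (D2D1 _ _ vS) (D2D1 _ _ z0O) /S setU1K ?in_setD1 ?(negbTE vO) ?andbF // in hD2S.
rewrite lerD2l ler_pM2l // in hD2S.
have hav := avg (OPT :\ z0) z0 v.
rewrite cW big_split /= -/(s z0) in hav.
have e : \sum_(i in OPT :\ z0) dq d q i v = \sum_(w in OPT :\ z0) dq d q v w.
  by apply: eq_bigr => w _; rewrite dq_sym.
rewrite e in hav.
have hK := KK_ge1.
have s0 : 0 <= s z0 by apply: sumr_ge0 => w _; apply: dq_ge0.
have hs : s z0 <= (k.-1)%:R * Delta d q Clique k OPT.
  rewrite -(ler_pM2l kR); apply: (le_trans hks); rewrite -hDel.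
  have -> : k%:R * ((k.-1)%:R * Delta d q Clique k OPT) = Delta d q Clique k OPT * (k%:R * (k.-1)%:R) by ring.
  done.
have h3 : (k.-1)%:R * dq d q z0 v <= (k.-1)%:R * (2 * KK * Delta d q Clique k OPT).
  apply: (le_trans hav).
  have K0 : 0 <= KK by lra.
  apply: (le_trans (y := KK * (2 * ((k.-1)%:R * Delta d q Clique k OPT)))).
    apply: ler_wpM2l => //; change (\sum_(w in OPT :\ z0) dq d q z0 w) with (s z0) in hD2S; lra.
  have -> : KK * (2 * ((k.-1)%:R * Delta d q Clique k OPT)) = (k.-1)%:R * (2 * KK * Delta d q Clique k OPT) by ring.
  done.
rewrite ler_pM2l // KK2 in h3.
exact: h3.
Qed.


Lemma st_spec (T : {set X}) z1 : z1 \in T ->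
  (exists2 z, z \in T & st d q T = st_val d q T z) /\
  (forall z, z \in T -> st d q T <= st_val d q T z).
Proof.
move=> z1T; rewrite /st; case: pickP => [z0 z0T | none].
  exact: (@bigmin_att R X (fun z => z \in T) (st_val d q T) z0 z0T).
by move: (none z1); rewrite z1T.
Qed.

Lemma sum_sym (W : {set X}) x :
  \sum_(w in W) dq d q w x = \sum_(w in W) dq d q x w.
Proof. by apply: eq_bigr => w _; rewrite dq_sym. Qed.

Lemma pow4 : powR 4 q = powR 2 q * powR 2 q.
Proof. by rewrite -powRM // (_ : (2 * 2 : R) = 4) //; lra. Qed.

Lemma star_case k OPT : (2 <= k)%N -> optimal_kset d q Star k OPT ->
  exists2 z0, z0 \in OPT & forall v, v \notin OPT ->
    powR (d z0 v) q <= powR 4 q * Delta d q Star k OPT.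
Proof.
move=> k2 [cO opt].
have [z1 z1O] := exists_in _ _ cO k2.
have [[z0 z0O hz0] stmin] := st_spec _ _ z1O.
exists z0 => // v vO.
have [cS cW] := card_swap _ _ _ _ cO z0O vO.
have k1R : (0 : R) < (k.-1)%:R by rewrite ltr0n; move: k2; clear; case: k => [|[|]].
set M := st d q OPT.
have hM : M = (k.-1)%:R * Delta d q Star k OPT.
  rewrite /Delta /div /div_norm -/M; field; by rewrite gt_eqF.
have hK := KK_ge1.
have K0 : 0 <= KK by lra.
have M0 : 0 <= M by rewrite /M hz0; apply: sumr_ge0 => w _; apply: dq_ge0.
have Del0 : 0 <= Delta d q Star k OPT.
  by rewrite /Delta /div /div_norm -/M divr_ge0.
have hM0 : \sum_(w in OPT :\ z0) dq d q z0 w = M by rewrite /M hz0.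
set S := v |: (OPT :\ z0).
have vS : v \in S by rewrite setU11.
have [[z zS hz] _] := st_spec _ _ vS.
have hS : st_val d q S z <= M by rewrite -hz; apply: opt.
have e44 : powR 4 q * Delta d q Star k OPT = (2 * KK) * ((2 * KK) * Delta d q Star k OPT).
  by rewrite pow4 KK2 mulrA.
case: (eqVneq z v) => [ezv | nzv].
  rewrite ezv /st_val /S setU1K ?in_setD1 ?(negbTE vO) ?andbF // in hS.
  have hav := avg (OPT :\ z0) z0 v.
  rewrite cW big_split /= sum_sym hM0 in hav.
  have h1 : (k.-1)%:R * dq d q z0 v <= (k.-1)%:R * (2 * KK * Delta d q Star k OPT).
    apply: (le_trans hav).
    apply: (le_trans (y := KK * (2 * ((k.-1)%:R * Delta d q Star k OPT)))).
      by apply: ler_wpM2l => //; lra.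
    have -> : KK * (2 * ((k.-1)%:R * Delta d q Star k OPT)) = (k.-1)%:R * (2 * KK * Delta d q Star k OPT) by ring.
    done.
  rewrite ler_pM2l // in h1.
  apply: (le_trans h1); rewrite e44 -mulrA; apply: ler_peMl.
    by rewrite mulr_ge0 // mulr_ge0.
  lra.
have zO : z \in OPT :\ z0 by move: zS; rewrite /S in_setU1 (negbTE nzv).
have [zz0 zO'] : z != z0 /\ z \in OPT by move: zO; rewrite in_setD1 => /andP.
set W := OPT :\ z0 :\ z.
have vW : v \notin W by rewrite !in_setD1 (negbTE vO) !andbF.
have z0W : z0 \notin W by rewrite !in_setD1 eqxx andbF.
have zW : z \notin W by rewrite !in_setD1 eqxx.
have eS : S :\ z = v |: W.
  apply/setP => w; rewrite /S /W !inE.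
  case: (eqVneq w v) => [->|]; first by rewrite eq_sym nzv.
  by rewrite /= andbC.
have eO : OPT :\ z = z0 |: W.
  apply/setP => w; rewrite /W !inE.
  case: (eqVneq w z0) => [->|] /=; first by rewrite eq_sym zz0 z0O.
  by case: (w != z); case: (w \in OPT).
have eO0 : OPT :\ z0 = z |: W by rewrite /W setD1K.
have cWW : #|W| = (k.-1).-1.
  move: (cardsD1 z (OPT :\ z0)); rewrite zO cW -/W /= => ->; by rewrite add1n.
rewrite /st_val eS big_setU1 //= in hS.
have hz1 := stmin z zO'; rewrite /st_val eO big_setU1 //= -/M in hz1.
rewrite eO0 big_setU1 //= in hM0.
have hav := avg W z0 z.
rewrite big_split /= sum_sym cWW in hav.
set a := dq d q z0 z in hav hM0.
set b := dq d q z v in hS.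
set Rz := \sum_(w in W) dq d q z w in hS hz1 hav.
set Q0 := \sum_(w in W) dq d q z0 w in hM0 hav.
have a0 : 0 <= a by apply: dq_ge0.
have b0 : 0 <= b by apply: dq_ge0.
have eza : dq d q z z0 = a by rewrite /a dq_sym.
rewrite eza in hz1.
have ba : b <= a by lra.
have ek : (k.-1)%:R = ((k.-1).-1)%:R + 1 :> R.
  by rewrite natr1; congr (_%:R); move: k2; clear; case: k => [|[|]].
have h1 : ((k.-1).-1)%:R * a <= KK * (2 * M - a).
  apply: (le_trans hav); apply: ler_wpM2l => //; lra.
have h2' : (((k.-1).-1)%:R + 1) * a <= 2 * KK * M.
  have e : (((k.-1).-1)%:R + 1) * a = ((k.-1).-1)%:R * a + a by ring.
  have e' : 2 * KK * M = KK * (2 * M - a) + KK * a by ring.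
  rewrite e e'; apply: lerD => //; exact: ler_peMl.
have h2 : (k.-1)%:R * a <= (k.-1)%:R * (2 * KK * Delta d q Star k OPT).
  rewrite ek; apply: (le_trans h2'); rewrite hM ek.
  have -> : 2 * KK * ((((k.-1).-1)%:R + 1) * Delta d q Star k OPT) = (((k.-1).-1)%:R + 1) * (2 * KK * Delta d q Star k OPT) by ring.
  done.
rewrite ler_pM2l // in h2.
apply: (le_trans (tri z0 z v)); rewrite -/a -/b e44.
apply: (le_trans (y := KK * (2 * a))); first by apply: ler_wpM2l => //; lra.
rewrite -mulrA mulrCA; apply: ler_wpM2l => //.
by apply: ler_wpM2l.
Qed.


Lemma exists_sub (T : {set X}) n : (n <= #|T|)%N -> exists2 L : {set X}, L \subset T & #|L| = n.
Proof.
elim: n => [|n IH] h; first by exists set0; rewrite ?sub0set ?cards0.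
have [L LT cL] := IH (ltnW h).
have : (0 < #|T :\: L|)%N by rewrite cardsDS // cL subn_gt0.
case/card_gt0P => x; rewrite inE => /andP [xL xT].
exists (x |: L); first by rewrite subUset sub1set xT LT.
by rewrite cardsU1 xL cL.
Qed.

Lemma bp_spec (T : {set X}) :
  (exists2 L, (L \in powerset T) && (#|L| == #|T|./2) & bp d q T = bp_val d q T L) /\
  (forall L, (L \in powerset T) && (#|L| == #|T|./2) -> bp d q T <= bp_val d q T L).
Proof.
have [L1 L1T cL1] : exists2 L : {set X}, L \subset T & #|L| = #|T|./2.
  by apply: exists_sub; rewrite leq_half_double; lia.
rewrite /bp; case: pickP => [L0 HL0 | none].
  exact: (@bigmin_att R {set X} (fun L => (L \in powerset T) && (#|L| == #|T|./2)) (bp_val d q T) L0 HL0).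
by move: (none L1); rewrite powersetE L1T cL1 eqxx.
Qed.

Lemma bp_val_compl (T L : {set X}) : L \subset T -> bp_val d q T (T :\: L) = bp_val d q T L.
Proof.
move=> LT; rewrite /bp_val.
have -> : T :\: (T :\: L) = L.
  apply/setP => x; rewrite !inE; case xL: (x \in L) => /=; [by rewrite (subsetP LT) | by case: (x \in T)].
rewrite exchange_big /=; apply: eq_bigr => l _; apply: eq_bigr => r _; exact: dq_sym.
Qed.

Lemma pow3 : powR 2 q + 1 <= powR 3 q.
Proof.
have e x : 0 < x -> powR x q = x * powR x (q - 1).
  move=> x0; rewrite -{2}(powRr1 (ltW x0)) -powRD; first by rewrite addrC subrK.
  by apply/implyP => _; rewrite gt_eqF.
rewrite (e 2) // (e 3) //.
have h1 : powR 2 (q - 1) <= powR 3 (q - 1).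
  apply: ge0_ler_powR; rewrite ?nnegrE //; first by rewrite subr_ge0.
  by rewrite ler_nat.
have h2 : powR 3 0 <= powR 3 (q - 1).
  by apply: ler_powR; [rewrite ler1n | rewrite subr_ge0].
rewrite powRr0 in h2.
lra.
Qed.

Lemma pow6 : powR 6 q = powR 2 q * powR 3 q.
Proof. by rewrite -powRM // (_ : (2 * 3 : R) = 6) //; lra. Qed.


Lemma bp_case k OPT : (2 <= k)%N -> ~~ odd k -> optimal_kset d q Bipartition k OPT ->
  exists2 z0, z0 \in OPT & forall v, v \notin OPT ->
    powR (d z0 v) q <= powR 6 q * Delta d q Bipartition k OPT.
Proof.
move=> k2 ko [cO opt].
move hm: (k./2) => m.
have hk : k = (m + m)%N by rewrite addnn -hm even_halfK.
have m1 : (0 < m)%N by move: k2; rewrite hk; lia.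
have mR : (0 : R) < m%:R by rewrite ltr0n.
have [[Ls HLs hbp] bpmin] := bp_spec OPT.
move: HLs; rewrite powersetE cO hm => /andP [LsO /eqP cLs].
set Rs := OPT :\: Ls.
have cRs : #|Rs| = m by rewrite /Rs cardsDS // cO cLs hk addnK.
set P := bp d q OPT.
have hK := KK_ge1.
have K0 : 0 <= KK by lra.
have hP : P = m%:R * m%:R * Delta d q Bipartition k OPT.
  rewrite /Delta /div /div_norm -/P hk natrD; field.
  by rewrite gt_eqF // addr_gt0.
have [l1 l1L] : exists l, l \in Ls by apply/card_gt0P; rewrite cLs.
pose row z := \sum_(r in Rs) dq d q z r.
case: (@Order.TotalTheory.arg_minP _ _ _ l1 (mem Ls) row l1L) => z0 z0L minz.
have z0O : z0 \in OPT by apply: (subsetP LsO).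
exists z0 => // v vO.
have hPs : P = \sum_(l in Ls) row l by rewrite /P hbp.
have hrow : m%:R * row z0 <= P.
  rewrite hPs -cLs -sum1_card natr_sum mulr_suml; apply: ler_sum => u uL.
  by rewrite mul1r; apply: minz.
have hL : m%:R * \sum_(l in Ls) dq d q z0 l <= KK * (m%:R * row z0 + P).
  rewrite mulr_sumr.
  apply: (le_trans (y := \sum_(l in Ls) KK * (row z0 + \sum_(r in Rs) dq d q l r))).
    apply: ler_sum => l _; have := avg Rs z0 l; rewrite cRs big_split /=.
    by rewrite sum_sym.
  rewrite -mulr_sumr big_split /= -hPs sumr_const cLs mulr_natl.
  done.
set T0 := \sum_(w in OPT) dq d q z0 w.
have hT0 : T0 = \sum_(l in Ls) dq d q z0 l + row z0.
  by rewrite /T0 (big_setID (A := OPT) Ls) /= (setIidPr LsO).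
have row0 : 0 <= row z0 by apply: sumr_ge0 => r _; apply: dq_ge0.
have hT : m%:R * T0 <= (2 * KK + 1) * P.
  rewrite hT0 mulrDr.
  have : KK * (m%:R * row z0) <= KK * P by apply: ler_wpM2l.
  lra.
have [cS cW] := card_swap _ _ _ _ cO z0O vO.
set S := v |: (OPT :\ z0).
have vS : v \in S by rewrite setU11.
have z0S : z0 \notin S.
  rewrite /S !inE eqxx /= orbF; apply/eqP => e; move: vO; by rewrite -e z0O.
have [[L' HL' hbpS] _] := bp_spec S.
move: HL'; rewrite powersetE cS hm => /andP [L'S /eqP cL'].
have hS : bp_val d q S L' <= P by rewrite -hbpS; apply: opt.
have [Lv [LvS cLv vLv hLv]] : exists Lv : {set X}, [/\ Lv \subset S, #|Lv| = m, v \in Lv &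
    bp_val d q S Lv <= P].
  case vL': (v \in L'); first by exists L'.
  exists (S :\: L'); split.
  - exact: subsetDl.
  - by rewrite cardsDS // cS cL' hk addnK.
  - by rewrite inE vL' vS.
  - by rewrite bp_val_compl.
set R' := S :\: Lv.
set L'' := z0 |: (Lv :\ v).
have z0Lv : z0 \notin Lv :\ v.
  rewrite in_setD1 negb_and; apply/orP; right; apply/negP => /(subsetP LvS) h; by rewrite h in z0S.
have eR : OPT :\: L'' = R'.
  apply/setP => w; rewrite /R' /L'' /S !inE.
  case: (eqVneq w v) => [->|wv] /=; first by rewrite vLv (negbTE vO) andbF.
  by case: (eqVneq w z0) => [->|wz0] /=; [rewrite ?eqxx /= ?andbF | case: (w \in Lv)].
have L''O : L'' \subset OPT.
  rewrite /L'' subUset sub1set z0O; apply/subsetP => w; rewrite in_setD1 => /andP [wv wL].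
  move: (subsetP LvS w wL); rewrite /S in_setU1 (negbTE wv) /= in_setD1.
  by case/andP.
have cL'' : #|L''| = m.
  rewrite /L'' cardsU1 z0Lv /=; move: (cardsD1 v Lv); rewrite vLv cLv /=.
  by move=> ->.
have hO := bpmin L''; rewrite powersetE L''O cO hm cL'' eqxx /= -/P in hO.
have hO' := hO isT.
rewrite /bp_val eR /L'' big_setU1 //= in hO'.
rewrite /bp_val -/R' (big_setD1 v vLv) /= in hLv.
have hvz : \sum_(r in R') dq d q v r <= \sum_(r in R') dq d q z0 r by lra.
have R'O : R' \subset OPT by rewrite -eR subsetDl.
have cR' : #|R'| = m by rewrite /R' cardsDS // cS cLv hk addnK.
have hav := avg R' z0 v.
rewrite cR' big_split /= sum_sym in hav.
have hsub : \sum_(r in R') dq d q z0 r <= T0.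
  by apply: sum_sub => // x _; apply: dq_ge0.
have h1 : m%:R * dq d q z0 v <= 2 * KK * T0.
  apply: (le_trans hav).
  have -> : 2 * KK * T0 = KK * (2 * T0) by ring.
  apply: ler_wpM2l => //; lra.
have h2 : m%:R * (m%:R * dq d q z0 v) <= m%:R * (m%:R * (2 * KK * (2 * KK + 1) * Delta d q Bipartition k OPT)).
  apply: (le_trans (y := m%:R * (2 * KK * T0))); first by apply: ler_wpM2l => //; apply: ltW.
  have -> : m%:R * (2 * KK * T0) = 2 * KK * (m%:R * T0) by ring.
  apply: (le_trans (y := 2 * KK * ((2 * KK + 1) * P))).
    apply: ler_wpM2l => //; lra.
  rewrite hP le_eqVlt; apply/orP; left; apply/eqP; ring.
rewrite !ler_pM2l // in h2.
apply: (le_trans h2); rewrite pow6 KK2 -mulrA -[X in _ <= X]mulrA; apply: ler_wpM2l; first exact: powR_ge0.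
apply: ler_wpM2r.
  have P0 : 0 <= P by rewrite /P hbp; apply: sumr_ge0 => l _; apply: sumr_ge0 => r _; apply: dq_ge0.
  by rewrite /Delta /div /div_norm -/P divr_ge0 // divr_ge0 // sqr_ge0.
have := pow3; lra.
Qed.


Lemma Delta_ge0 K k T : 0 <= Delta d q K k T.
Proof.
have s0 (A : {set X}) x : 0 <= \sum_(w in A) dq d q x w by apply: sumr_ge0 => w _; apply: dq_ge0.
rewrite /Delta; apply: divr_ge0; last first.
  by case: K => //=; rewrite divr_ge0 // sqr_ge0.
case: K => /=.
- rewrite /cl divr_ge0 //; apply: sumr_ge0 => u _; apply: sumr_ge0 => w _; exact: dq_ge0.
- rewrite /st; case: pickP => [z0 _|//].
  apply: (big_ind (fun x => 0 <= x)).
  + exact: s0.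
  + by move=> x y x0 y0; rewrite le_min x0 y0.
  + by move=> i _; exact: s0.
- rewrite /bp; case: pickP => [L0 _|//].
  have b0 L : 0 <= bp_val d q T L by apply: sumr_ge0 => l _; exact: s0.
  apply: (big_ind (fun x => 0 <= x)).
  + exact: b0.
  + by move=> x y x0 y0; rewrite le_min x0 y0.
  + by move=> i _; exact: b0.
Qed.

End G.

Theorem theorem7 (R : realType) (X : finType) (d : X -> X -> R) (q : R)
  (k : nat) (K : divkind) (OPT : {set X}) :
  is_metric d -> 1 <= q -> (2 <= k <= #|X|)%N ->
  (K = Bipartition -> ~~ odd k) ->
  optimal_kset d q K k OPT ->
  exists2 z0, z0 \in OPT &
    ~: ball d z0 (div_const R K * powR (Delta d q K k OPT) q^-1) \subset OPT.
Proof.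
move=> met q1 /andP [k2 _] hodd opt.
have D0 := @Delta_ge0 R X d q K k OPT.
case: K hodd opt D0 => hodd opt D0 /=.
- have [z0 z0O h] := @clique_case R X d q met q1 k OPT k2 opt.
  by exists z0 => //; apply: (@reduce R X d q met q1) => //; lra.
- have [z0 z0O h] := @star_case R X d q met q1 k OPT k2 opt.
  by exists z0 => //; apply: (@reduce R X d q met q1) => //; lra.
- have [z0 z0O h] := @bp_case R X d q met q1 k OPT k2 (hodd erefl) opt.
  by exists z0 => //; apply: (@reduce R X d q met q1) => //; lra.
Qed.
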